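(* Let $A$ be a Noetherian integral domain and let $B$ be an overring of $A$ that is well-centered on $A$. Then $B$ is Noetherian.
   Context: An overring of $A$ is a subring of the field of fractions of $A$ containing $A$. $B$ is well-centered on $A$ if for each $b\in B$ there is a unit $u$ of $B$ with $ub\in A$. *)

(* Defs.v *)
(* Rings A ⊆ B are modelled as subrings (Prop-valued subsets)
   of an ambient field K; K is the field of fractions of A. *)
From mathcomp Require Import all_boot all_algebra.
Set Implicit Arguments. Unset Strict Implicit. Unset Printing Implicit Defensive.
Import GRing.Theory.
Local Open Scope ring_scope.

Definition is_subring (K : fieldType) (S : K -> Prop) : Prop :=
  [/\ S 0, S 1, (forall x y, S x -> S y -> S (x - y))
    & (forall x y, S x -> S y -> S (x * y))].

Definition is_ideal (K : fieldType) (S I : K -> Prop) : Prop :=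
  [/\ (forall x, I x -> S x), I 0, (forall x y, I x -> I y -> I (x + y))
    & (forall r x, S r -> I x -> I (r * x))].

Definition fin_gen_ideal (K : fieldType) (S I : K -> Prop) : Prop :=
  exists g : seq K, (forall x, x \in g -> I x) /\
    (forall x, I x -> exists r : seq K, size r = size g /\
        (forall c, c \in r -> S c) /\ x = \sum_(i < size g) r`_i * g`_i).

Definition noetherian (K : fieldType) (S : K -> Prop) : Prop :=
  forall I, is_ideal S I -> fin_gen_ideal S I.

Definition is_frac_field (K : fieldType) (A : K -> Prop) : Prop :=
  forall x : K, exists a b, [/\ A a, A b, b != 0 & x = a / b].

Definition overring (K : fieldType) (A B : K -> Prop) : Prop :=
  is_subring B /\ (forall x, A x -> B x).

Definition unit_of (K : fieldType) (B : K -> Prop) (u : K) : Prop :=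
  B u /\ exists v, B v /\ u * v = 1.

Definition well_centered (K : fieldType) (A B : K -> Prop) : Prop :=
  forall b, B b -> exists u, unit_of B u /\ A (u * b).

(* Main.v *)
Require Import Defs.
From mathcomp Require Import all_boot all_algebra.
Import GRing.Theory.
Local Open Scope ring_scope.

Theorem proposition3p1 (K : fieldType) (A B : K -> Prop) :
  is_subring A -> is_frac_field A -> noetherian A ->
  overring A B -> well_centered A B -> noetherian B.
Proof.
move=> [A0 A1 Asub Amul] _ noeA [[B0 B1 Bsub Bmul] AB] wc J [JB J0 Jadd Jmul].
have Aadd : forall x y, A x -> A y -> A (x + y).
  move=> x y Ax Ay; have -> : x + y = x - (0 - y) by rewrite sub0r opprK.
  by apply: (Asub) => //; apply: (Asub).
have hI : is_ideal A (fun x => A x /\ J x).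
  split.
  - by move=> x [].
  - by split.
  - by move=> x y [? ?] [? ?]; split; [apply: (Aadd) | apply: (Jadd)].
  - by move=> r x Ar [Ax Jx]; split; [apply: (Amul) | apply: (Jmul) => //; apply: (AB)].
have [g [gI gen]] := noeA _ hI.
exists g; split; first by move=> x /gI [].
move=> x Jx.
have [u [[Bu [v [Bv uv]]] Aux]] := wc x (JB x Jx).
have Jux : J (u * x) by apply: (Jmul).
have [r [sr [rA ex]]] := gen _ (conj Aux Jux).
have -> : x = v * (u * x) by rewrite mulrA (mulrC v) uv mul1r.
rewrite ex.
exists (map (fun c => v * c) r); split; first by rewrite size_map.
split.
  move=> c /mapP [c0 c0r ->]; apply: (Bmul) => //; apply: (AB); exact: rA.
rewrite mulr_sumr; apply: eq_bigr => i _.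
rewrite (nth_map 0); last by rewrite sr.
by rewrite mulrA.
Qed.
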